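(* The representation $\rho$ in the following setting is reducible if and only if $w\ne-2$. Setting: $q$ a root of unity with $n$ odd and $q^4\ne1$ ($N=n$ odd), $\bar N=(N-1)/2$, $k\in\mathbb Z$, $w=-q^{2k}-q^{-2k}$; $V$ has basis $\{u_i:-\bar N\le i\le\bar N\}$, with $u^*_i=u_{-\bar N}$ for $i<-\bar N$, $u^*_i=u_i$ for $|i|\le\bar N$, $u^*_i=u_{\bar N}$ for $i>\bar N$; $\lambda_i=q^{2i}+q^{-2i}$, and for $i\ne0$: $s_i=\frac{q^{2i-k+1}-q^{-2i+k-1}}{q^{2i}-q^{-2i}}$, $s'_i=\frac{q^{2i+2}-q^{-2i-2}}{q^{2i}-q^{-2i}}s_i$, $\beta_i=\frac{2q^{k-1}-2q^{-k+1}}{(q^{2i}-q^{-2i})^3}$; $\rho$ is the representation of $\mathcal S_q(\Sigma_{1,1})$ with $\rho(\alpha_0)u_i=\lambda_iu_i$ ($-\bar N\le i\le0$), $\rho(\alpha_0)u_i=\lambda_iu_i+u_{-i}$ ($0<i\le\bar N$), $\rho(\alpha_\infty)u_i=s_iu_{i+1}+s_{-i}u^*_{i-1}$ ($-\bar N\le i<0$), $\rho(\alpha_\infty)u_0=(q^{k-1}+q^{-k+1})u_{-1}+(q^2-q^{-2})(q^{-k+1}-q^{k-1})u_1$, $\rho(\alpha_\infty)u_i=\beta_iu^*_{-i-1}-\beta_iu_{-i+1}+s'_{-i}u_{i-1}+s'_iu^*_{i+1}$ ($0<i\le\bar N$).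
   Context: $\mathcal S_q(\Sigma_{1,1})$ is the Kauffman bracket skein algebra of the one-punctured torus, generated by the slope $0,1,\infty$ curves $\alpha_0,\alpha_1,\alpha_\infty$; when $q^4\ne1$ a representation is determined by the images of $\alpha_0$ and $\alpha_\infty$. For $q$ a root of unity, $n=\mathrm{ord}(q^2)$ and $N=\mathrm{ord}(q^4)$. (The formulas above are known to define a representation.) *)

(* Defs.v *)
From HB Require Import structures.
From mathcomp Require Import all_boot all_order all_algebra all_field.
Set Implicit Arguments. Unset Strict Implicit. Unset Printing Implicit Defensive.
Import Order.TTheory GRing.Theory Num.Theory.
Local Open Scope ring_scope.

(* Basis u_i, -nbar <= i <= nbar, of V, indexed by 'I_(nbar.*2.+1)
   via  a : 'I_(nbar.*2.+1)  <->  i = a - nbar.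
   Row vectors: a linear map f is encoded by the matrix whose row a is the
   coordinate vector of f(u_(a - nbar)); it acts by  v |-> v *m A. *)

Section Rep.
Variables (F : fieldType) (q : F) (nbar : nat) (k : int).

Definition dimV := (nbar.*2).+1.

Definition clampi (t : int) : int :=
  Num.max (- (nbar%:Z)) (Num.min (nbar%:Z) t).

(* coordinate vector of u*_t (equal to u_t when |t| <= nbar) *)
Definition ev (t : int) : 'rV[F]_dimV :=
  delta_mx 0 (inord (absz (clampi t + nbar%:Z)) : 'I_dimV).

Definition lam (i : int) : F := q ^ (2 * i) + q ^ (- (2 * i)).
Definition ss (i : int) : F :=
  (q ^ (2 * i - k + 1) - q ^ (- (2 * i) + k - 1)) / (q ^ (2 * i) - q ^ (- (2 * i))).
Definition ss' (i : int) : F :=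
  (q ^ (2 * i + 2) - q ^ (- (2 * i) - 2)) / (q ^ (2 * i) - q ^ (- (2 * i))) * ss i.
Definition beta (i : int) : F :=
  (2 * q ^ (k - 1) - 2 * q ^ (- k + 1)) / (q ^ (2 * i) - q ^ (- (2 * i))) ^+ 3.

Definition img0 (i : int) : 'rV[F]_dimV :=
  if i <= 0 then lam i *: ev i else lam i *: ev i + ev (- i).

Definition imgInf (i : int) : 'rV[F]_dimV :=
  if i < 0 then ss i *: ev (i + 1) + ss (- i) *: ev (i - 1)
  else if i == 0 then
    (q ^ (k - 1) + q ^ (- k + 1)) *: ev (-1)
    + ((q ^+ 2 - q ^- 2) * (q ^ (- k + 1) - q ^ (k - 1))) *: ev 1
  else beta i *: ev (- i - 1) - beta i *: ev (- i + 1)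
       + ss' (- i) *: ev (i - 1) + ss' i *: ev (i + 1).

Definition rho0 : 'M[F]_dimV :=
  \matrix_(a < dimV, b < dimV) img0 (a%:Z - nbar%:Z) 0 b.
Definition rhoInf : 'M[F]_dimV :=
  \matrix_(a < dimV, b < dimV) imgInf (a%:Z - nbar%:Z) 0 b.

End Rep.

Definition mx_reducible (F : fieldType) (m : nat) (A B : 'M[F]_m) : Prop :=
  exists W : 'M[F]_m, [/\ (0 < \rank W)%N, (\rank W < m)%N, stablemx W A & stablemx W B].

(* Main.v *)
Require Import Defs.
From HB Require Import structures.
From mathcomp Require Import all_boot all_order all_algebra all_field.
From mathcomp Require Import zify ring lra.
Import Order.TTheory GRing.Theory Num.Theory.
Local Open Scope ring_scope.

Section Basic.
Variables (nb : nat).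
Local Notation n := (dimV nb).
Local Notation e := (ev algC nb).

Lemma clampiE (t : int) : - (nb%:Z) <= t -> t <= nb%:Z -> clampi nb t = t.
Proof. move=> h1 h2; rewrite /clampi; lia. Qed.

Lemma clampi_low (t : int) : t <= - (nb%:Z) -> clampi nb t = - (nb%:Z).
Proof. move=> h1; rewrite /clampi; lia. Qed.

Lemma clampi_high (t : int) : nb%:Z <= t -> clampi nb t = nb%:Z.
Proof. move=> h1; rewrite /clampi; lia. Qed.

Definition idx (t : int) : 'I_n := inord (absz (t + nb%:Z)).

Lemma idxE (t : int) : - (nb%:Z) <= t -> t <= nb%:Z -> (idx t)%:Z - nb%:Z = t.
Proof.
move=> h1 h2; rewrite /idx inordK; first lia.
rewrite /dimV -addnn; lia.
Qed.

Lemma evE (t : int) : - (nb%:Z) <= t -> t <= nb%:Z -> e t = delta_mx 0 (idx t).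
Proof. by move=> h1 h2; rewrite /ev clampiE. Qed.

Lemma ev_low (t : int) : t <= - (nb%:Z) -> e t = e (- (nb%:Z)).
Proof. move=> h; rewrite /ev clampi_low // clampiE //; lia. Qed.

Lemma ev_high (t : int) : nb%:Z <= t -> e t = e (nb%:Z).
Proof. move=> h; rewrite /ev clampi_high // clampiE //; lia. Qed.

Lemma ev_ord (i : 'I_n) : e (i%:Z - nb%:Z) = delta_mx 0 i.
Proof.
have hi : (i < nb + nb + 1)%N by rewrite addn1 addnn; exact: ltn_ord.
rewrite evE; try lia. congr delta_mx; apply: val_inj; rewrite /idx /= subrK absz_nat inordK //; exact: (ltn_ord i).
Qed.

Lemma ev_mul (t : int) (M : 'M[algC]_n) : - (nb%:Z) <= t -> t <= nb%:Z ->
  e t *m M = row (idx t) M.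
Proof. by move=> h1 h2; rewrite evE // rowE. Qed.

End Basic.
Section Q.
Variables (q : algC) (nb : nat).
Local Notation NN := (nb + nb + 1)%N.
Hypothesis HD : forall x : int, (q ^ x - q ^ (- x) == 0) = ((NN%:Z) %| x)%Z.
Hypothesis Hq0 : q != 0.

Lemma ndvd (x j : int) : x != 0 -> (`|x| < NN)%N -> ~~ ((NN%:Z) %| x + j * NN%:Z)%Z.
Proof.
move=> hx hlt; apply/negP => /dvdzP [m hm].
have e : x = (m - j) * NN%:Z by rewrite mulrBl -hm; ring.
rewrite e in hx hlt.
have hmj : m - j != 0 by apply: contraNneq hx => ->; rewrite mul0r.
move: hlt; rewrite abszM absz_nat.
have : (0 < `|m - j|)%N by rewrite absz_gt0.
case: `|m - j|%N => [//|r] _; rewrite mulSn; lia.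
Qed.

Lemma Dnz (a b x j : int) : b = - a -> a = x + j * NN%:Z -> x != 0 -> (`|x| < NN)%N ->
  q ^ a - q ^ b != 0.
Proof. by move=> -> ea hx hl; rewrite HD ea ndvd. Qed.

Lemma Dz (a b : int) : b = - a -> ((NN%:Z) %| a)%Z -> q ^ a - q ^ b = 0.
Proof. by move=> -> h; apply/eqP; rewrite HD. Qed.

Lemma qE (u v : int) : q ^ u * q ^ v = q ^ (u + v).
Proof. by rewrite expfzDr. Qed.

Lemma lamD (a b : int) : lam q a - lam q b =
  (q ^ (a - b) - q ^ (b - a)) * (q ^ (a + b) - q ^ (- (a + b))).
Proof.
rewrite /lam mulrBl !mulrBr !qE.
have -> : a - b + (a + b) = 2 * a by ring.
have -> : a - b + - (a + b) = - (2 * b) by ring.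
have -> : b - a + (a + b) = 2 * b by ring.
have -> : b - a + - (a + b) = - (2 * a) by ring.
ring.
Qed.

Lemma lamN (t : int) : lam q (- t) = lam q t.
Proof. by rewrite /lam mulrN opprK addrC. Qed.

Lemma lam_inj (a b : int) : (`|a| <= nb)%N -> (`|b| <= nb)%N -> lam q a = lam q b ->
  a = b \/ a = - b.
Proof.
move=> ha hb /eqP; rewrite -subr_eq0 lamD mulf_eq0 => /orP [h|h].
  case: (eqVneq (a - b) 0) => [/eqP|hne]; first by rewrite subr_eq0 => /eqP; left.
  by move: h; rewrite (negPf (Dnz _ _ (a - b) 0 _ _ hne _)) //; [ring|ring|lia].
case: (eqVneq (a + b) 0) => [/eqP|hne].
  by rewrite addr_eq0 => /eqP; right.
by move: h; rewrite (negPf (Dnz _ _ (a + b) 0 _ _ hne _)) //; [ring|lia].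
Qed.


Local Notation e := (ev algC nb).
Local Notation n := (dimV nb).

Lemma rho0_ev (t : int) : - (nb%:Z) <= t -> t <= nb%:Z -> e t *m rho0 q nb = img0 q nb t.
Proof. by move=> h1 h2; rewrite ev_mul //; apply/rowP => b; rewrite !mxE idxE. Qed.

Lemma rhoInf_ev (k t : int) : - (nb%:Z) <= t -> t <= nb%:Z -> e t *m rhoInf q nb k = imgInf q nb k t.
Proof. by move=> h1 h2; rewrite ev_mul //; apply/rowP => b; rewrite !mxE idxE. Qed.

Section Red.
Variables (k c : int).
Hypotheses (hc1 : - (nb%:Z) <= c) (hc2 : c < nb%:Z) (hcd : ((NN%:Z) %| 2 * c - k + 1)%Z).
Let m := absz (c + nb%:Z + 1).
Let W : 'M[algC]_n := pid_mx m.

Lemma delta_W (i : 'I_n) : (i < m)%N -> ((delta_mx 0 i : 'rV_n) <= W)%MS.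
Proof.
move=> hi; have -> : (delta_mx 0 i : 'rV_n) = delta_mx 0 i *m W.
  by rewrite -rowE; apply/rowP => j; rewrite !mxE eqxx hi andbT /= eq_sym.
exact: submxMl.
Qed.

Lemma memW (s : int) : s <= c -> (e s <= W)%MS.
Proof.
move=> hs; apply: delta_W; rewrite inordK /m; first by rewrite /clampi; lia.
by rewrite /clampi /dimV -addnn; lia.
Qed.

Lemma memWs (a : algC) (s : int) : (s <= c) || (a == 0) -> (a *: e s <= W)%MS.
Proof.
case/orP => [h|/eqP ->]; first exact/scalemx_sub/memW.
by rewrite scale0r sub0mx.
Qed.

Lemma stableW (M : 'M[algC]_n) :
  (forall t, - (nb%:Z) <= t -> t <= c -> (e t *m M <= W)%MS) -> stablemx W M.
Proof.
move=> H; apply/row_subP => i; rewrite row_mul.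
case: (ltnP i m) => hi.
  have -> : row i W = (delta_mx 0 i : 'rV_n).
    by apply/rowP => j; rewrite !mxE hi andbT eqxx /= eq_sym.
  rewrite -ev_ord; apply: H; first by lia.
  by move: hi; rewrite /m; lia.
have -> : row i W = 0.
  by apply/rowP => j; rewrite !mxE ltnNge hi andbF.
by rewrite mul0mx sub0mx.
Qed.

Lemma ssc : ss q k c = 0.
Proof.
by rewrite /ss (Dz (2 * c - k + 1) (- (2 * c) + k - 1)) ?mul0r //; ring.
Qed.

Lemma red : mx_reducible (rho0 q nb) (rhoInf q nb k).
Proof.
exists W; split.
- rewrite rank_pid_mx /m /dimV -?addnn; lia.
- rewrite rank_pid_mx /m /dimV -?addnn; lia.
- apply: stableW => t h1 h2; rewrite rho0_ev; last by lia.
    rewrite /img0; case: ifP => [_|/negbT]; last rewrite -ltNge => ht0; first by apply: memWs; rewrite h2.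
    by apply: addmx_sub; [apply: memWs; apply/orP; left | apply: memW]; lia.
  by [].
- apply: stableW => t h1 h2; rewrite rhoInf_ev; last by lia.
    2: by [].
  rewrite /imgInf; case: ifP => ht.
    apply: addmx_sub; apply: memWs; last by apply/orP; left; lia.
    case: (eqVneq t c) => [->|htc]; first by rewrite ssc eqxx orbT.
    by apply/orP; left; lia.
  case: ifP => [/eqP ht0|ht0].
    subst t; apply: addmx_sub; apply: memWs; first by apply/orP; left; lia.
    case: (eqVneq c 0) => [hc0|hc0]; last by apply/orP; left; lia.
    apply/orP; right; rewrite (Dz (- k + 1) (k - 1)) ?mulr0 //; first by ring.
    by move: hcd; rewrite hc0 mulr0 add0r.
  rewrite -scaleNr; apply: addmx_sub; first apply: addmx_sub; first apply: addmx_sub.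
  + by apply: memWs; apply/orP; left; lia.
  + by apply: memWs; apply/orP; left; lia.
  + by apply: memWs; apply/orP; left; lia.
  + case: (eqVneq t c) => [->|htc]; first by apply: memWs; rewrite /ss' ssc mulr0 eqxx orbT.
    by apply: memWs; apply/orP; left; lia.
Qed.

End Red.

Lemma scale_sub (W : 'M[algC]_n) (a : algC) (u : 'rV_n) :
  (a *: u <= W)%MS -> a != 0 -> (u <= W)%MS.
Proof. by move=> h ha; rewrite -[u](scalerK ha); apply: scalemx_sub. Qed.

Lemma extract (W : 'M[algC]_n) (a : algC) (u v : 'rV_n) :
  ((a *: u + v)%R <= W)%MS -> (v <= W)%MS -> a != 0 -> (u <= W)%MS.
Proof.
move=> h hv ha; apply: (@scale_sub W a u _ ha).
have -> : a *: u = (a *: u + v) + (-1) *: v by rewrite scaleN1r addrK.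
by apply: addmx_sub; [| apply: scalemx_sub].
Qed.

Lemma rev_valE (i : 'I_n) : (rev_ord i)%:Z - nb%:Z = - (i%:Z - nb%:Z).
Proof.
have hi : (i < nb + nb + 1)%N by rewrite addn1 addnn; exact: ltn_ord.
rewrite /=; move: (i : nat) hi => j hj; rewrite /dimV -addnn; lia.
Qed.

Lemma A_neg (t : int) : - (nb%:Z) <= t -> t <= 0 -> e t *m rho0 q nb = lam q t *: e t.
Proof. by move=> h1 h2; rewrite rho0_ev /img0 ?h2 //; lia. Qed.

Lemma A_pos (t : int) : 0 < t -> t <= nb%:Z ->
  e t *m rho0 q nb = lam q t *: e t + e (- t).
Proof.
move=> h1 h2; rewrite rho0_ev /img0; try lia.
by case: ifP => //; lia.
Qed.

Lemma A_coef (v : 'rV[algC]_n) (b : 'I_n) :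
  (v *m rho0 q nb) 0 b = lam q (b%:Z - nb%:Z) * v 0 b
     + (if (b < nb)%N then v 0 (rev_ord b) else 0).
Proof.
have Aab : forall a : 'I_n, rho0 q nb a b =
    lam q (a%:Z - nb%:Z) * (a == b)%:R + (nb < a)%N%:R * (rev_ord a == b)%:R.
  move=> a; rewrite mxE /img0 ev_ord.
  have ha : (a < nb + nb + 1)%N by rewrite addn1 addnn; exact: ltn_ord.
  case: ifP => h.
    have -> : (nb < a)%N = false by lia.
    by rewrite !mxE eqxx /= mul0r addr0 eq_sym.
  have -> : (nb < a)%N = true by lia.
  have -> : - (a%:Z - nb%:Z) = (rev_ord a)%:Z - nb%:Z by rewrite rev_valE.
  by rewrite ev_ord !mxE eqxx /= mul1r eq_sym (eq_sym b).
rewrite mxE; under eq_bigr => a _ do rewrite Aab mulrDr.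
rewrite big_split /= (bigD1 b) //= eqxx mulr1 big1 ?addr0; last first.
  by move=> a /negbTE ->; rewrite mulr0 mulr0.
rewrite mulrC; congr (_ + _).
rewrite (bigD1 (rev_ord b)) //= rev_ordK eqxx mulr1 big1 ?addr0; last first.
  move=> a ha; have -> : (rev_ord a == b) = false.
    by apply/negbTE; apply: contra ha => /eqP <-; rewrite rev_ordK.
  by rewrite mulr0 mulr0.
have hb := ltn_ord b.
have hr : (rev_ord b : nat) = (dimV nb - b.+1)%N by [].
have hd : dimV nb = (nb + nb + 1)%N by rewrite /dimV addn1 addnn.
case: ifP => h.
  have -> : (nb < rev_ord b)%N = true by lia.
  by rewrite mulr1.
rewrite /=; have -> : (nb < dimV nb - b.+1)%N = false by lia.
by rewrite mulr0.
Qed.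


Lemma eig_in (W : 'M[algC]_n) (M : 'M[algC]_n) : stablemx W M -> (0 < \rank W)%N ->
  exists2 v : 'rV_n, v != 0 & (v <= W)%MS /\ exists mu, v *m M = mu *: v.
Proof.
move=> sW r0; set V := row_base W.
have sV : stablemx V M by rewrite stablemx_row_base.
have [mu] := eigenvalue_closed (conjmx V M) r0.
move/eigenvalueP => [x hx x0].
exists (x *m V).
  apply: contra x0 => /eqP h; apply/eqP; apply: (row_free_inj (row_base_free W)).
  by rewrite h mul0mx.
split; first by rewrite (submx_trans (submxMl _ _)) // eq_row_base.
exists mu; rewrite -mulmxA.
have -> : V *m M = conjmx V M *m V by rewrite /conjmx mulmxKpV.
by rewrite mulmxA hx scalemxAl.
Qed.

Lemma nb_lt_rev (b : 'I_n) : (b < nb)%N -> (nb < rev_ord b)%N.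
Proof.
have hb := ltn_ord b.
have hr : (rev_ord b : nat) = (dimV nb - b.+1)%N by [].
have hd : dimV nb = (nb + nb + 1)%N by rewrite /dimV addn1 addnn.
lia.
Qed.

Lemma lam_rev (b : 'I_n) : lam q ((rev_ord b)%:Z - nb%:Z) = lam q (b%:Z - nb%:Z).
Proof. by rewrite rev_valE lamN. Qed.

Lemma eig_class (v : 'rV[algC]_n) (mu : algC) : v != 0 -> v *m rho0 q nb = mu *: v ->
  exists i : 'I_n, (i <= nb)%N /\ v 0 i != 0 /\ v = v 0 i *: delta_mx 0 i.
Proof.
move=> v0 hv.
have cf : forall b : 'I_n, lam q (b%:Z - nb%:Z) * v 0 b
     + (if (b < nb)%N then v 0 (rev_ord b) else 0) = mu * v 0 b.
  by move=> b; rewrite -A_coef hv mxE.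
have s1 : forall b : 'I_n, (nb < b)%N -> v 0 b = 0.
  move=> b hb; have := cf b; rewrite ifN; last by rewrite -leqNgt ltnW.
  rewrite addr0 => /eqP; rewrite -subr_eq0 -mulrBl mulf_eq0 => /orP [|/eqP //].
  rewrite subr_eq0 => /eqP hl.
  have := cf (rev_ord b).
  have hrb : (rev_ord b < nb)%N.
    have hb2 := ltn_ord b.
    have hr : (rev_ord b : nat) = (dimV nb - b.+1)%N by [].
    have hd : dimV nb = (nb + nb + 1)%N by rewrite /dimV addn1 addnn.
    lia.
  rewrite hrb rev_ordK lam_rev hl => h.
  by have := congr1 (fun x => x - mu * v 0 (rev_ord b)) h; rewrite /= addrAC !subrr add0r.
have s0 : forall b : 'I_n, (if (b < nb)%N then v 0 (rev_ord b) else 0) = 0.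
  by move=> b; case: ifP => // h; apply: s1; apply: nb_lt_rev.
have [i hi] : exists i : 'I_n, v 0 i != 0.
  case: (pickP (fun i : 'I_n => v 0 i != 0)) => [i hi|h]; first by exists i.
  by case/eqP: v0; apply/rowP => j; rewrite mxE; apply/eqP; rewrite -[_ == _]negbK h.
have inb : (i <= nb)%N by rewrite leqNgt; apply: contra hi => /s1 ->.
have hmu : mu = lam q (i%:Z - nb%:Z).
  have := cf i; rewrite s0 addr0 => /eqP; rewrite -subr_eq0 -mulrBl mulf_eq0 (negbTE hi) orbF.
  by rewrite subr_eq0 => /eqP.
exists i; split => //; split => //.
apply/rowP => b; rewrite !mxE eqxx /=.
case: (eqVneq i b) => [->|hib]; first by rewrite mulr1.
rewrite mulr0; case: (ltnP nb b) => hb; first exact: s1.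
have := cf b; rewrite s0 addr0 hmu => /eqP; rewrite -subr_eq0 -mulrBl mulf_eq0.
case/orP => [|/eqP //]; rewrite subr_eq0 => /eqP hl.
have hb1 : (`|b%:Z - nb%:Z| <= nb)%N by lia.
have hi1 : (`|i%:Z - nb%:Z| <= nb)%N by lia.
have hbi : b <> i :> nat by move=> h; move/val_inj: h => h2; rewrite h2 eqxx in hib.
by case: (lam_inj _ _ hb1 hi1 hl) => h; exfalso; apply: hbi; lia.
Qed.


Section Irr.
Variables (k j : int).
Hypothesis hk : k = j * NN%:Z.
Hypothesis hnb : (0 < nb)%N.
Variable W : 'M[algC]_n.
Hypothesis sA : stablemx W (rho0 q nb).
Hypothesis sB : stablemx W (rhoInf q nb k).

Lemma ss_nz t : t != 0 -> - (nb%:Z) <= t -> t < nb%:Z -> ss q k t != 0.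
Proof.
move=> h0 h1 h2; rewrite /ss mulf_neq0 ?invr_neq0 //.
  apply: (Dnz _ _ (2 * t + 1) (- j)); [ring | rewrite hk; ring | lia | lia].
apply: (Dnz _ _ (2 * t) 0); [ring | ring | lia | lia].
Qed.

Lemma ss'_nz t : 0 < t -> t < nb%:Z -> ss' q k t != 0.
Proof.
move=> h1 h2; rewrite /ss' mulf_neq0 ?ss_nz //; try lia.
rewrite mulf_neq0 ?invr_neq0 //.
  apply: (Dnz _ _ (2 * t + 2) 0); [ring | ring | lia | lia].
apply: (Dnz _ _ (2 * t) 0); [ring | ring | lia | lia].
Qed.

Lemma C2_nz : (q ^+ 2 - q ^- 2) * (q ^ (- k + 1) - q ^ (k - 1)) != 0.
Proof.
rewrite mulf_neq0 //.
  have := Dnz 2 (- 2) 2 0; apply; [ring | ring | lia | lia].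
apply: (Dnz _ _ 1 (- j)); [ring | rewrite hk; ring | lia | lia].
Qed.

Lemma inW (u : 'rV_n) (M : 'M_n) : (u <= W)%MS -> stablemx W M -> (u *m M <= W)%MS.
Proof. by move=> hu hM; apply: submx_trans hM; apply: submxMr. Qed.

Lemma down t : - (nb%:Z) < t -> t <= 0 -> (e t <= W)%MS -> (e (t - 1) <= W)%MS.
Proof.
move=> h1 h2 ht.
have hw := inW _ _ ht sB.
have hc : (((e t *m rhoInf q nb k) *m rho0 q nb + (- lam q (t + 1)) *: (e t *m rhoInf q nb k))%R <= W)%MS.
  by apply: addmx_sub; [exact: inW | exact: scalemx_sub].
rewrite rhoInf_ev /imgInf in hc; try lia.
case: (eqVneq t 0) => [t0|tn0].
  subst t; rewrite ltxx eqxx /= in hc.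
  rewrite mulmxDl -!scalemxAl A_neg ?A_pos ?lamN in hc; try lia.
  rewrite add0r; apply: (@scale_sub W _ _ _ C2_nz).
  set C1 := (q ^ (k - 1) + q ^ (- k + 1)) in hc.
  set C2 := (q ^+ 2 - q ^- 2) * (q ^ (- k + 1) - q ^ (k - 1)) in hc *.
  suff <- : C1 *: (lam q 1 *: e (-1)) + C2 *: (lam q 1 *: e 1 + e (-1))
     + - lam q (0 + 1) *: (C1 *: e (-1) + C2 *: e 1) = C2 *: e (-1) by [].
  by apply/rowP => x; rewrite !mxE add0r; ring.
have hneg : t < 0 by lia.
rewrite hneg in hc.
rewrite mulmxDl -!scalemxAl !A_neg in hc; try lia.
apply: (@scale_sub W (ss q k (- t) * (lam q (t - 1) - lam q (t + 1)))).
  suff <- : ss q k t *: (lam q (t + 1) *: e (t + 1)) + ss q k (- t) *: (lam q (t - 1) *: e (t - 1))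
     + - lam q (t + 1) *: (ss q k t *: e (t + 1) + ss q k (- t) *: e (t - 1)) =
     (ss q k (- t) * (lam q (t - 1) - lam q (t + 1))) *: e (t - 1) by [].
  by apply/rowP => x; rewrite !mxE; ring.
rewrite mulf_neq0 ?ss_nz; try lia.
rewrite lamD; apply: mulf_neq0.
  apply: (Dnz _ _ (- 2) 0); [ring | ring | lia | lia].
apply: (Dnz _ _ (2 * t) 0); [ring | ring | lia | lia].
Qed.

Lemma up t : - (nb%:Z) <= t -> t < nb%:Z -> (forall s, s <= t -> (e s <= W)%MS) ->
  (e (t + 1) <= W)%MS.
Proof.
move=> h1 h2 H.
have hw := inW _ _ (H t (lexx t)) sB.
rewrite rhoInf_ev /imgInf in hw; try lia.
case: (ltrP t 0) => [hneg|hnn].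
  rewrite hneg in hw.
  apply: (@extract W _ _ _ hw); first by apply: scalemx_sub; apply: H; lia.
  by apply: ss_nz; lia.
have hf : (t < 0) = false by lia.
rewrite hf in hw.
case: (eqVneq t 0) => [t0|tn0].
  subst t; rewrite eqxx addrC in hw; rewrite add0r.
  apply: (@extract W _ _ _ hw); first by apply: scalemx_sub; apply: H; lia.
  exact: C2_nz.
rewrite (negbTE tn0) addrC in hw.
apply: (@extract W _ _ _ hw); last by apply: ss'_nz; lia.
rewrite -scaleNr; apply: addmx_sub; first apply: addmx_sub; apply: scalemx_sub; apply: H; lia.
Qed.

Lemma irr : (0 < \rank W)%N -> row_full W.
Proof.
move=> r0.
have [v v0 [vW [mu hmu]]] := eig_in _ _ sA r0.
have [i [inb [vi hv]]] := eig_class _ _ v0 hmu.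
have hs0 : (e (i%:Z - nb%:Z) <= W)%MS.
  by rewrite ev_ord; apply: (@scale_sub W (v 0 i)) => //; rewrite -hv.
have hlow : (e (- (nb%:Z)) <= W)%MS.
  have D : forall d : nat, (d <= i)%N -> (e (i%:Z - nb%:Z - d%:Z) <= W)%MS.
    elim => [|d IH] hd; first by rewrite subr0.
    have e1 : (d.+1)%:Z = d%:Z + 1 by rewrite -addn1 PoszD.
    have -> : i%:Z - nb%:Z - (d.+1)%:Z = (i%:Z - nb%:Z - d%:Z) - 1 by rewrite e1; ring.
    apply: down; try lia; apply: IH; lia.
  have := D i (leqnn i); by have -> : i%:Z - nb%:Z - i%:Z = - (nb%:Z) by ring.
have U : forall d : nat, (d <= nb + nb)%N -> forall s, - (nb%:Z) <= s -> s <= - (nb%:Z) + d%:Z ->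
    (e s <= W)%MS.
  elim => [|d IH] hd s hs1 hs2.
    by have -> : s = - (nb%:Z) by lia.
  case: (lerP s (- (nb%:Z) + d%:Z)) => hs3; first by apply: IH => //; lia.
  have -> : s = (- (nb%:Z) + d%:Z) + 1 by lia.
  apply: up; try lia.
  move=> s' hs'; case: (lerP (- (nb%:Z)) s') => hs4.
    by apply: IH => //; lia.
  by rewrite ev_low //; lia.
rewrite -sub1mx; apply/row_subP => a; rewrite row1 -ev_ord.
have ha := ltn_ord a.
have hd : dimV nb = (nb + nb + 1)%N by rewrite /dimV addn1 addnn.
apply: (U (nb + nb)%N) => //; lia.
Qed.

End Irr.
End Q.

Theorem mainTheorem12 (q : algC) (n : nat) (k : int) :
  n.-primitive_root (q ^+ 2) -> odd n -> q ^+ 4 != 1 ->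
  (mx_reducible (rho0 q n./2) (rhoInf q n./2 k)
   <-> - q ^ (2 * k) - q ^ (- (2 * k)) != -2).
Proof.
move=> prim odn q4.
set nb := n./2.
have hn : n = (nb + nb + 1)%N.
  have h := odd_double_half n; rewrite odn -addnn in h; rewrite /nb; lia.
have n0 : (0 < n)%N by rewrite hn addn1.
have Hq0 : q != 0.
  apply/negP => /eqP q0; move: (prim_expr_order prim).
  rewrite q0 expr0n /= expr0n eqn0Ngt n0 /= => /eqP; by rewrite eq_sym oner_eq0.
have hnb : (0 < nb)%N.
  rewrite lt0n; apply/negP => /eqP nb0.
  have n1 : n = 1%N by rewrite hn nb0.
  move: (prim_expr_order prim); rewrite n1 expr1 => h2.
  by move/eqP: q4; apply; rewrite (_ : 4 = 2 * 2)%N // exprM h2 expr1n.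
have HD : forall x : int, (q ^ x - q ^ (- x) == 0) = ((nb + nb + 1)%N %| x)%Z.
  move=> x; rewrite -hn subr_eq0.
  have qx0 : q ^ x != 0 by rewrite expfz_neq0.
  rewrite -invr_expz -(inj_eq (mulfI qx0)) mulfV // -expfzDr //.
  have -> : x + x = (2 : int) * x by ring.
  rewrite -exprz_exp.
  change (q ^ (2 : int)) with (q ^+ 2).
  clear qx0; case: x => m /=.
    by rewrite -(prim_order_dvd prim) dvdzE.
  by rewrite invr_eq1 -(prim_order_dvd prim) dvdzE.
have Ew : - q ^ (2 * k) - q ^ (- (2 * k)) = -2 - (q ^ k - q ^ (- k)) ^+ 2.
  rewrite sqrrB !expr2 -!expfzDr // subrr expr0z.
  have -> : k + k = 2 * k by ring.
  have -> : - k + - k = - (2 * k) by ring.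
  ring.
have Ey : (-2 - (q ^ k - q ^ (- k)) ^+ 2 == -2) = ((q ^ k - q ^ (- k)) ^+ 2 == 0).
  by rewrite -subr_eq0 addrAC subrr add0r oppr_eq0.
rewrite Ew Ey sqrf_eq0 HD.
split.
  move=> [W [r0 rlt sA sB]]; apply/negP => /dvdzP [j hj].
  have := @irr q nb HD Hq0 k j hj hnb W sA sB r0.
  by rewrite /row_full => /eqP h; rewrite h ltnn in rlt.
move=> hk.
set NN := (nb + nb + 1)%N in HD hk *.
set M := (k - 1) * (nb%:Z + 1) + nb%:Z.
have NN0 : (NN%:Z != 0) by rewrite /NN; lia.
have r0 : 0 <= (M %% NN)%Z by apply: modz_ge0.
have r1 : (M %% NN)%Z < NN%:Z by apply: ltz_pmod; rewrite /NN; lia.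
have hM := divz_eq M NN.
set Q := (M %/ NN)%Z in hM.
set r := (M %% NN)%Z in hM r0 r1.
have hr : r = M - Q * NN%:Z by rewrite [in RHS]hM addrAC subrr add0r.
set c := r - nb%:Z.
have hdiv : 2 * c - k + 1 = (k - 1 - 2 * Q) * NN%:Z.
  by rewrite /c hr /M /NN !PoszD; ring.
have hcd : (NN%:Z %| 2 * c - k + 1)%Z by apply/dvdzP; exists (k - 1 - 2 * Q).
have hc1 : - (nb%:Z) <= c by rewrite /c; lia.
have hc2 : c < nb%:Z.
  case: (eqVneq c nb%:Z) => [hc|hc]; last by move: r1; rewrite /c /NN in hc *; lia.
  exfalso; move/negP: hk; apply; apply/dvdzP; exists (2 - k + 2 * Q).
  have -> : (2 - k + 2 * Q) * NN%:Z = NN%:Z - (k - 1 - 2 * Q) * NN%:Z by ring.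
  rewrite -hdiv hc /NN !PoszD; ring.
exact: (@red q nb HD Hq0 k c hc1 hc2 hcd).
Qed.
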